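(* Let $(\gamma_n)_{n\ge 0}$ be a sequence of positive reals satisfying conditions (C1)–(C7) below, and let $(p_n)_{n\ge0}$ be the associated symmetric orthonormal polynomials. Then for every $\omega\in\mathbb{R}$ the limit $\lim_{n\to\infty}\gamma_n\bigl(p_n^2(\omega)+p_{n+1}^2(\omega)\bigr)$ exists. Moreover, for every $B>0$ there exist constants $m_B, M_B$ with $0<m_B<M_B<\infty$ such that for all $\omega$ with $|\omega|\le B$, \[ m_B\le \lim_{n\to\infty}\gamma_n\bigl(p_n^2(\omega)+p_{n+1}^2(\omega)\bigr)\le M_B, \] and the convergence of this limit is uniform on the set $\{\omega: |\omega|\le B\}$.
   Context: Given positive reals $\gamma_n>0$ ($n\ge 0$), set $\gamma_{-1}=1$, $p_{-1}(\omega)=0$, $p_0(\omega)=1$, and define polynomials by the three-term recurrence $\gamma_n p_{n+1}(\omega)=\omega p_n(\omega)-\gamma_{n-1}p_{n-1}(\omega)$ for $n\ge0$; this is a symmetric positive definite orthonormal polynomial family with recursion coefficients $\gamma_n$. Let $\Delta_n=\gamma_{n+1}-\gamma_n$ and $\Delta^2_n=\Delta_{n+1}-\Delta_n$. The conditions are: (C1) $\gamma_n\to\infty$; (C2) $\Delta_n\to 0$; (C3) $(\gamma_n)$ is almost increasing: there exist $n_0,m_0$ such that $\gamma_{n+m}>\gamma_n$ for all $n\ge n_0$ and all $m\ge m_0$; (C4) $\sum_{j\ge0}1/\gamma_j=\infty$; (C5) there exists $\kappa>1$ with $\sum_{j\ge0}\gamma_j^{-\kappa}<\infty$; (C6) $\sum_{n\ge0}|\Delta_n|/\gamma_n^2<\infty$;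 (C7) $\sum_{n\ge0}|\Delta^2_n|/\gamma_n<\infty$. *)

(* Defs.v *)
From Stdlib Require Import Reals Lra.
From Coquelicot Require Import Coquelicot.
Open Scope R_scope.

Definition gamma_prev (gamma : nat -> R) (n : nat) : R :=
  match n with O => 1 | S k => gamma k end.

(* pair_p gamma w n = (p_{n-1}(w), p_n(w)), with p_{-1} = 0, p_0 = 1, and
   gamma_n p_{n+1} = w p_n - gamma_{n-1} p_{n-1}. *)
Fixpoint pair_p (gamma : nat -> R) (w : R) (n : nat) : R * R :=
  match n with
  | O => (0, 1)
  | S k => let (a, b) := pair_p gamma w k in
           (b, (w * b - gamma_prev gamma k * a) / gamma k)
  end.

Definition opoly (gamma : nat -> R) (n : nat) (w : R) : R := snd (pair_p gamma w n).

Definition Delta (gamma : nat -> R) (n : nat) : R := gamma (S n) - gamma n.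
Definition Delta2 (gamma : nat -> R) (n : nat) : R :=
  Delta gamma (S n) - Delta gamma n.

Definition cond_C1 (gamma : nat -> R) : Prop := is_lim_seq gamma p_infty.
Definition cond_C2 (gamma : nat -> R) : Prop := is_lim_seq (Delta gamma) 0.
Definition cond_C3 (gamma : nat -> R) : Prop :=
  exists n0 m0 : nat, forall n m : nat, (n0 <= n)%nat -> (m0 <= m)%nat ->
    gamma (n + m)%nat > gamma n.
Definition cond_C4 (gamma : nat -> R) : Prop :=
  is_lim_seq (sum_n (fun j => / gamma j)) p_infty.
Definition cond_C5 (gamma : nat -> R) : Prop :=
  exists kappa : R, kappa > 1 /\ ex_series (fun j => Rpower (gamma j) (- kappa)).
Definition cond_C6 (gamma : nat -> R) : Prop :=
  ex_series (fun n => Rabs (Delta gamma n) / (gamma n) ^ 2).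
Definition cond_C7 (gamma : nat -> R) : Prop :=
  ex_series (fun n => Rabs (Delta2 gamma n) / gamma n).

Definition Fseq (gamma : nat -> R) (w : R) (n : nat) : R :=
  gamma n * ((opoly gamma n w) ^ 2 + (opoly gamma (S n) w) ^ 2).

(* Main.v *)
Require Import Defs.
From Stdlib Require Import Reals Lra Psatz.
From Coquelicot Require Import Coquelicot.
Import Defs.
Open Scope R_scope.

Lemma sq_abs (x : R) : x ^ 2 = Rabs x ^ 2.
Proof. rewrite <- (pow2_abs x). reflexivity. Qed.

Lemma xy_bound x y : Rabs (x * y) <= (x^2 + y^2) / 2.
Proof. rewrite Rabs_mult, (sq_abs x), (sq_abs y).
  pose proof (pow2_ge_0 (Rabs x - Rabs y)). nra. Qed.

Lemma dsq_bound x y : Rabs (y^2 - x^2) <= x^2 + y^2.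
Proof. apply Rabs_le. split; nra. Qed.

Lemma key_bound (a a1 a2 w x y B : R) :
  2 <= a -> B + 1 <= a -> Rabs (a1 - a) <= 1 -> Rabs w <= B ->
  let s := x^2 + y^2 in
  Rabs (- (((a2 - a1) - (a1 - a)) / 2) * (y^2 - x^2)
    + ((a2 - a1)/2) * (w^2 * y^2 - 2 * a * w * x * y - (a1 - a) * (a + a1) * x^2) / a1^2
    + ((a1 - a) / a1) * ((a1 - a) * x^2 + w * x * y))
  <= (B^2 + B + 4) * a * s *
     (Rabs ((a2 - a1) - (a1 - a)) / a + Rabs (a2 - a1) / a1 ^ 2 + Rabs (a1 - a) / a ^ 2).
Proof.
  intros Ha HaB Hd Hw s.
  assert (HB : 0 <= B) by (pose proof (Rabs_pos w); lra).
  assert (Ha1 : a / 2 <= a1 <= 2 * a) by (apply Rabs_le_between in Hd; lra).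
  assert (Hs : 0 <= s) by (unfold s; nra).
  set (e := (a2 - a1) - (a1 - a)) in *. set (d := a1 - a) in *. set (d' := a2 - a1) in *.
  assert (Hx2 : x^2 <= s) by (unfold s; nra).
  assert (Hy2 : y^2 <= s) by (unfold s; nra).
  assert (Hxy := xy_bound x y). fold s in Hxy.
  assert (Hw2 : w^2 <= B^2) by (rewrite sq_abs; pose proof (Rabs_pos w); nra).
  assert (T1 : Rabs (- (e / 2) * (y^2 - x^2)) <= Rabs e / 2 * s).
  { rewrite Rabs_mult, Rabs_Ropp, Rabs_div by lra.
    rewrite (Rabs_right 2) by lra.
    pose proof (dsq_bound x y). fold s in H.
    apply Rmult_le_compat_l; [|exact H].
    pose proof (Rabs_pos e); lra. }
  assert (I2 : Rabs (w^2 * y^2 - 2 * a * w * x * y - d * (a + a1) * x^2)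
               <= (B^2 + B + 3) * a * s).
  { eapply Rle_trans. apply Rabs_triang. eapply Rle_trans.
    apply Rplus_le_compat_r. apply Rabs_triang.
    rewrite !Rabs_Ropp.
    assert (A1 : Rabs (w^2 * y^2) <= B^2 * a * s).
    { rewrite Rabs_right. 2:{ apply Rle_ge. apply Rmult_le_pos; apply pow2_ge_0. }
      assert (w^2 * y^2 <= B^2 * s) by (apply Rmult_le_compat; try apply pow2_ge_0; lra).
      assert (0 <= B^2 * s) by (apply Rmult_le_pos; [apply pow2_ge_0|lra]).
      nra. }
    assert (A2 : Rabs (2 * a * w * x * y) <= B * a * s).
    { replace (2 * a * w * x * y) with ((2 * a) * w * (x * y)) by ring.
      rewrite (Rabs_mult (2*a*w) (x*y)), (Rabs_mult (2*a) w), (Rabs_right (2*a)) by lra.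
      pose proof (Rabs_pos w). pose proof (Rabs_pos (x*y)).
      assert (Rabs w * Rabs (x*y) <= B * (s/2)) by (apply Rmult_le_compat; lra).
      nra. }
    assert (A3 : Rabs (d * (a + a1) * x^2) <= 3 * a * s).
    { rewrite !Rabs_mult. rewrite (Rabs_right (a+a1)) by lra.
      rewrite (Rabs_right (x^2)) by nra.
      pose proof (Rabs_pos d).
      assert (Rabs d * (a + a1) <= 1 * (3 * a)) by (apply Rmult_le_compat; lra).
      assert (0 <= x^2) by nra.
      nra. }
    lra. }
  assert (T2 : Rabs (d' / 2 * (w^2 * y^2 - 2 * a * w * x * y - d * (a + a1) * x^2) / a1^2)
               <= (B^2 + B + 3) / 2 * a * s * (Rabs d' / a1^2)).
  { unfold Rdiv. rewrite !Rabs_mult, !Rabs_inv.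
    rewrite (Rabs_right (a1^2)) by nra. rewrite (Rabs_right 2) by lra.
    pose proof (Rabs_pos d').
    assert (0 < / a1^2) by (apply Rinv_0_lt_compat; nra).
    assert (Rabs d' * / 2 * Rabs (w ^ 2 * y ^ 2 - 2 * a * w * x * y - d * (a + a1) * x ^ 2)
            <= Rabs d' * / 2 * ((B ^ 2 + B + 3) * a * s)).
    { apply Rmult_le_compat_l; [nra | exact I2]. }
    nra. }
  assert (T3 : Rabs (d / a1 * (d * x^2 + w * x * y)) <= (2 + B) * a * s * (Rabs d / a^2)).
  { rewrite Rabs_mult. unfold Rdiv. rewrite Rabs_mult, Rabs_inv, (Rabs_right a1) by lra.
    assert (I3 : Rabs (d * x^2 + w * x * y) <= (1 + B/2) * s).
    { eapply Rle_trans. apply Rabs_triang.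
      rewrite Rabs_mult, (Rabs_right (x^2)) by nra.
      replace (w * x * y) with (w * (x * y)) by ring. rewrite Rabs_mult.
      pose proof (Rabs_pos w). pose proof (Rabs_pos (x*y)). pose proof (Rabs_pos d).
      assert (Rabs w * Rabs (x*y) <= B * (s/2)) by (apply Rmult_le_compat; lra).
      assert (Rabs d * x^2 <= 1 * s) by (apply Rmult_le_compat; nra).
      nra. }
    pose proof (Rabs_pos d).
    assert (/ a1 <= 2 / a).
    { apply (Rmult_le_reg_l a1). lra. field_simplify; try lra.
      apply (Rmult_le_reg_l a). lra. field_simplify; lra. }
    assert (0 < / a1) by (apply Rinv_0_lt_compat; lra).
    assert (Rabs d * / a1 * Rabs (d * x ^ 2 + w * x * y) <= Rabs d * (2 / a) * ((1 + B/2) * s)).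
    { apply Rmult_le_compat; try nra. apply Rabs_pos. }
    replace ((2 + B) * a * s * (Rabs d * / a ^ 2)) with (Rabs d * (2 / a) * ((1 + B/2) * s))
      by (field; lra).
    lra. }
  eapply Rle_trans. apply Rabs_triang. eapply Rle_trans.
  apply Rplus_le_compat_r. apply Rabs_triang.
  assert (P1 : 0 <= Rabs e / a) by (apply Rdiv_le_0_compat; [apply Rabs_pos|lra]).
  assert (P2 : 0 <= Rabs d' / a1^2) by (apply Rdiv_le_0_compat; [apply Rabs_pos|nra]).
  assert (P3 : 0 <= Rabs d / a^2) by (apply Rdiv_le_0_compat; [apply Rabs_pos|nra]).
  clearbody e d d' s.
  replace (Rabs e / 2 * s) with (a * s * (Rabs e / a) / 2) in T1 by (field; lra).
  assert (0 <= a * s) by nra.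
  assert (HB2 : 0 <= B^2) by apply pow2_ge_0.
  assert (a * s * (Rabs e / a) / 2 <= (B^2+B+4) * (a * s * (Rabs e / a))).
  { assert (0 <= a * s * (Rabs e / a)) by (apply Rmult_le_pos; lra).
    replace (a * s * (Rabs e / a) / 2) with (/2 * (a * s * (Rabs e / a))) by (field; lra).
    apply Rmult_le_compat_r; lra. }
  assert ((B ^ 2 + B + 3) / 2 * a * s * (Rabs d' / a1 ^ 2) <= (B^2+B+4) * (a * s * (Rabs d' / a1 ^ 2))).
  { assert (0 <= a * s * (Rabs d' / a1^2)) by (apply Rmult_le_pos; lra).
    replace ((B ^ 2 + B + 3) / 2 * a * s * (Rabs d' / a1 ^ 2)) with ((B ^ 2 + B + 3) / 2 * (a * s * (Rabs d' / a1 ^ 2))) by ring.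
    apply Rmult_le_compat_r; lra. }
  assert ((2 + B) * a * s * (Rabs d / a ^ 2) <= (B^2+B+4) * (a * s * (Rabs d / a ^ 2))).
  { assert (0 <= a * s * (Rabs d / a^2)) by (apply Rmult_le_pos; lra).
    replace ((2 + B) * a * s * (Rabs d / a ^ 2)) with ((2 + B) * (a * s * (Rabs d / a ^ 2))) by ring.
    apply Rmult_le_compat_r; lra. }
  replace (d' / 2 * (w ^ 2 * y ^ 2 - 2 * a * w * x * y - d * (a + a1) * x ^ 2) / a1 ^ 2)
    with (d' / 2 * (w ^ 2 * y ^ 2 - 2 * a * w * x * y - d * (a + a1) * x ^ 2) / a1 ^ 2) in T2 by reflexivity.
  lra.
Qed.
Lemma pair_S g w n : pair_p g w (S n) =
  (snd (pair_p g w n), (w * snd (pair_p g w n) - gamma_prev g n * fst (pair_p g w n)) / g n).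
Proof. simpl. destruct (pair_p g w n). reflexivity. Qed.


Lemma opoly_SS g w n : opoly g (S (S n)) w =
  (w * opoly g (S n) w - g n * opoly g n w) / g (S n).
Proof.
  unfold opoly. rewrite (pair_S g w (S n)). cbn [fst snd gamma_prev].
  rewrite (pair_S g w n). cbn [fst snd]. reflexivity.
Qed.

Definition sq2 (g : nat -> R) (w : R) (n : nat) : R := (opoly g n w)^2 + (opoly g (S n) w)^2.
Definition Qv (g : nat -> R) (w : R) (n : nat) : R := g n * sq2 g w n - w * opoly g n w * opoly g (S n) w
   + Delta g n / 2 * (opoly g (S n) w ^ 2 - opoly g n w ^ 2).
Definition bb (g : nat -> R) (n : nat) : R := Rabs (Delta2 g n) / g n + Rabs (Delta g (S n)) / g (S n) ^ 2
   + Rabs (Delta g n) / g n ^ 2.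

Lemma ident (a a1 a2 w x y : R) : a1 <> 0 ->
  let z := (w * y - a * x) / a1 in
  (a1 * (y^2 + z^2) - w * y * z + (a2 - a1) / 2 * (z^2 - y^2))
  - (a * (x^2 + y^2) - w * x * y + (a1 - a) / 2 * (y^2 - x^2))
  = - (((a2 - a1) - (a1 - a)) / 2) * (y^2 - x^2)
    + ((a2 - a1)/2) * (w^2 * y^2 - 2 * a * w * x * y - (a1 - a) * (a + a1) * x^2) / a1^2
    + ((a1 - a) / a1) * ((a1 - a) * x^2 + w * x * y).
Proof. intros H z. unfold z. field. auto. Qed.

Lemma Qv_step g w n B : (forall k, 0 < g k) ->
  2 <= g n -> B + 1 <= g n -> Rabs (Delta g n) <= 1 -> Rabs w <= B ->
  Rabs (Qv g w (S n) - Qv g w n) <= (B^2 + B + 4) * g n * sq2 g w n * bb g n.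
Proof.
  intros Hp H2 HB Hd Hw.
  unfold Qv, sq2, bb, Delta2, Delta in *. rewrite opoly_SS.
  rewrite (ident (g n) (g (S n)) (g (S (S n))) w (opoly g n w) (opoly g (S n) w)).
  2: { pose proof (Hp (S n)); lra. }
  apply key_bound; auto.
Qed.

Lemma Qv_F g w n : Rabs (Qv g w n - g n * sq2 g w n) <= (Rabs w + Rabs (Delta g n)) / 2 * sq2 g w n.
Proof.
  unfold Qv.
  replace (g n * sq2 g w n - w * opoly g n w * opoly g (S n) w +
   Delta g n / 2 * (opoly g (S n) w ^ 2 - opoly g n w ^ 2) - g n * sq2 g w n)
   with (- (w * (opoly g n w * opoly g (S n) w)) + Delta g n / 2 * (opoly g (S n) w ^ 2 - opoly g n w ^ 2)) by ring.
  eapply Rle_trans. apply Rabs_triang. rewrite Rabs_Ropp, !Rabs_mult.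
  pose proof (xy_bound (opoly g n w) (opoly g (S n) w)).
  pose proof (dsq_bound (opoly g n w) (opoly g (S n) w)).
  unfold Rdiv. rewrite Rabs_mult, Rabs_inv, (Rabs_right 2) by lra.
  unfold sq2. pose proof (Rabs_pos w). pose proof (Rabs_pos (Delta g n)).
  set (X := opoly g n w) in *. set (Y := opoly g (S n) w) in *. clearbody X Y.
  assert (Rabs w * Rabs (X * Y) <= Rabs w * ((X^2+Y^2)/2)) by (apply Rmult_le_compat_l; lra).
  assert (Rabs (Delta g n) * / 2 * Rabs (Y ^ 2 - X ^ 2) <= Rabs (Delta g n) * / 2 * (X^2+Y^2))
    by (apply Rmult_le_compat_l; lra).
  rewrite Rabs_mult in *. lra.
Qed.

Lemma sq2_pos_le g w n : 0 <= sq2 g w n.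
Proof. unfold sq2. nra. Qed.

Lemma Qv_bounds g w n B : B + 1 <= g n -> Rabs (Delta g n) <= 1 -> Rabs w <= B ->
  g n * sq2 g w n / 2 <= Qv g w n <= 3 / 2 * (g n * sq2 g w n).
Proof.
  intros HB Hd Hw. pose proof (Qv_F g w n). pose proof (sq2_pos_le g w n).
  apply Rabs_le_between in H.
  assert ((Rabs w + Rabs (Delta g n)) / 2 * sq2 g w n <= g n / 2 * sq2 g w n).
  { apply Rmult_le_compat_r; lra. }
  lra.
Qed.

Lemma Qv_step2 g w n B : (forall k, 0 < g k) ->
  2 <= g n -> B + 1 <= g n -> Rabs (Delta g n) <= 1 -> Rabs w <= B ->
  Rabs (Qv g w (S n) - Qv g w n) <= 2 * (B^2 + B + 4) * bb g n * Qv g w n.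
Proof.
  intros Hp H2 HB Hd Hw.
  pose proof (Qv_step g w n B Hp H2 HB Hd Hw).
  pose proof (Qv_bounds g w n B HB Hd Hw).
  assert (0 <= bb g n).
  { unfold bb. pose proof (Hp n). pose proof (Hp (S n)).
    repeat apply Rplus_le_le_0_compat; apply Rdiv_le_0_compat; try apply Rabs_pos; nra. }
  assert (0 <= B) by (pose proof (Rabs_pos w); lra).
  assert (0 <= (B^2+B+4) * bb g n) by (apply Rmult_le_pos; nra).
  assert ((B^2+B+4) * bb g n * (g n * sq2 g w n) <= (B^2+B+4) * bb g n * (2 * Qv g w n))
    by (apply Rmult_le_compat_l; lra).
  nra.
Qed.

Fixpoint psum (b : nat -> R) (n : nat) : R :=
  match n with O => 0 | S k => psum b k + b k end.

Lemma psum_sumf b n : psum b (S n) = sum_f_R0 b n.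
Proof. induction n. simpl. ring. simpl in *. rewrite IHn. ring. Qed.

Lemma psum_mono b n j : (forall k, 0 <= b k) -> psum b n <= psum b (n + j).
Proof. intros H. induction j. rewrite Nat.add_0_r; lra.
  rewrite Nat.add_succ_r. simpl. pose proof (H (n+j)%nat). lra. Qed.

Lemma tail_small b : (forall k, 0 <= b k) -> ex_series b ->
  forall eps, 0 < eps -> exists N, forall n j, (N <= n)%nat -> psum b (n + j) - psum b n <= eps.
Proof.
  intros Hb [l Hl] eps He. apply is_series_Reals in Hl.
  destruct (Hl (eps/2)) as [N HN]. lra.
  exists (S N). intros n j Hn. destruct n as [|n']. lia.
  replace (S n' + j)%nat with (S (n' + j)) by lia.
  rewrite !psum_sumf.
  pose proof (HN n' ltac:(lia)). pose proof (HN (n'+j)%nat ltac:(lia)).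
  unfold R_dist in *. apply Rabs_def2 in H. apply Rabs_def2 in H0. lra.
Qed.

Lemma bb_nonneg g : (forall k, 0 < g k) -> forall n, 0 <= bb g n.
Proof. intros Hp n. unfold bb. pose proof (Hp n). pose proof (Hp (S n)).
    repeat apply Rplus_le_le_0_compat; apply Rdiv_le_0_compat; try apply Rabs_pos; nra. Qed.

Lemma bb_series g : cond_C6 g -> cond_C7 g -> ex_series (bb g).
Proof.
  intros H6 H7. unfold bb.
  apply (ex_series_plus (fun n => Rabs (Delta2 g n) / g n + Rabs (Delta g (S n)) / g (S n) ^ 2)
     (fun n => Rabs (Delta g n) / g n ^ 2)); [|exact H6].
  apply (ex_series_plus (fun n => Rabs (Delta2 g n) / g n) (fun n => Rabs (Delta g (S n)) / g (S n) ^ 2)).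
  exact H7.
  apply (ex_series_incr_1 (fun n => Rabs (Delta g n) / g n ^ 2)). exact H6.
Qed.

Lemma exp_small t : 0 <= t <= 1/2 -> exp t - 1 <= 2 * t.
Proof.
  intros Ht. pose proof (exp_ineq1_le (-t)).
  assert (exp t * exp (-t) = 1) by (rewrite <- exp_plus; replace (t + - t) with 0 by ring; apply exp_0).
  pose proof (exp_pos t).
  assert (exp t * (1 - t) <= 1) by nra.
  nra.
Qed.

Definition good (g : nat -> R) (B : R) (N0 : nat) :=
  forall k, (N0 <= k)%nat -> 2 <= g k /\ B + 1 <= g k /\ Rabs (Delta g k) <= 1.

Lemma Qv_nonneg g w B N0 n : good g B N0 -> (N0 <= n)%nat -> Rabs w <= B -> 0 <= Qv g w n.
Proof.
  intros Hg Hn Hw. destruct (Hg n Hn) as (_ & H1 & H2).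
  pose proof (Qv_bounds g w n B H1 H2 Hw). pose proof (sq2_pos_le g w n).
  assert (0 <= g n) by (pose proof (Rabs_pos w); lra). nra.
Qed.

Lemma prod_bound g w B N0 : (forall k, 0 < g k) -> good g B N0 -> Rabs w <= B ->
  forall n j, (N0 <= n)%nat ->
  Rabs (Qv g w (n + j) - Qv g w n) <=
    Qv g w n * (exp (2 * (B^2 + B + 4) * (psum (bb g) (n + j) - psum (bb g) n)) - 1).
Proof.
  intros Hp Hg Hw n j Hn. set (c := 2 * (B^2 + B + 4)).
  assert (Hc : 0 <= c) by (unfold c; pose proof (Rabs_pos w); nra).
  pose proof (Qv_nonneg g w B N0 n Hg Hn Hw) as Q0.
  induction j.
  - rewrite Nat.add_0_r. replace (Qv g w n - Qv g w n) with 0 by ring.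
    replace (psum (bb g) n - psum (bb g) n) with 0 by ring. rewrite Rmult_0_r, exp_0.
    rewrite Rabs_R0. lra.
  - rewrite Nat.add_succ_r. simpl psum.
    set (m := (n + j)%nat) in *.
    destruct (Hg m ltac:(unfold m; lia)) as (H1 & H2 & H3).
    pose proof (Qv_step2 g w m B Hp H1 H2 H3 Hw) as St. fold c in St.
    pose proof (Qv_nonneg g w B N0 m Hg ltac:(unfold m; lia) Hw) as Qm.
    pose proof (bb_nonneg g Hp m) as Hb.
    set (E := exp (c * (psum (bb g) m - psum (bb g) n))) in *.
    assert (HE : 0 < E) by apply exp_pos.
    replace (c * (psum (bb g) m + bb g m - psum (bb g) n))
      with (c * (psum (bb g) m - psum (bb g) n) + c * bb g m) by ring.
    rewrite exp_plus. fold E.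
    pose proof (exp_ineq1_le (c * bb g m)).
    assert (Qv g w m <= Qv g w n * E) by (apply Rabs_le_between in IHj; lra).
    assert (c * bb g m * Qv g w m <= c * bb g m * (Qv g w n * E)).
    { apply Rmult_le_compat_l. apply Rmult_le_pos; lra. lra. }
    assert (Qv g w n * E * (1 + c * bb g m) <= Qv g w n * E * exp (c * bb g m)).
    { apply Rmult_le_compat_l. nra. lra. }
    replace (Qv g w (S m) - Qv g w n) with ((Qv g w m - Qv g w n) + (Qv g w (S m) - Qv g w m)) by ring.
    eapply Rle_trans. apply Rabs_triang. nra.
Qed.

Lemma prod_bound2 g w B N0 : (forall k, 0 < g k) -> good g B N0 -> Rabs w <= B ->
  forall n j, (N0 <= n)%nat ->
  2 * (B^2 + B + 4) * (psum (bb g) (n + j) - psum (bb g) n) <= 1/2 ->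
  Rabs (Qv g w (n + j) - Qv g w n) <=
    Qv g w n * (2 * (2 * (B^2 + B + 4) * (psum (bb g) (n + j) - psum (bb g) n))).
Proof.
  intros Hp Hg Hw n j Hn Ht.
  pose proof (prod_bound g w B N0 Hp Hg Hw n j Hn).
  pose proof (Qv_nonneg g w B N0 n Hg Hn Hw).
  pose proof (psum_mono (bb g) n j (bb_nonneg g Hp)).
  assert (0 <= 2 * (B^2 + B + 4)) by (pose proof (Rabs_pos w); nra).
  pose proof (exp_small (2 * (B ^ 2 + B + 4) * (psum (bb g) (n + j) - psum (bb g) n))
     ltac:(split; [apply Rmult_le_pos; lra | lra])).
  eapply Rle_trans. exact H. apply Rmult_le_compat_l; lra.
Qed.


Lemma opoly_1 g w : g 0%nat <> 0 -> opoly g 1 w = w / g 0%nat.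
Proof. intros H. unfold opoly. rewrite pair_S. simpl. field. exact H. Qed.

Lemma gen_sq w B a c u v : Rabs w <= B -> 0 < c ->
  ((w * u - a * v) / c)^2 <= 2 * (B^2 + a^2) / c^2 * (u^2 + v^2).
Proof.
  intros Hw Hc.
  assert (w^2 <= B^2) by (rewrite sq_abs; pose proof (Rabs_pos w); nra).
  replace (((w * u - a * v) / c)^2) with ((w * u - a * v)^2 / c^2) by (field; lra).
  unfold Rdiv. rewrite Rmult_comm. rewrite (Rmult_comm (2 * (B^2 + a^2))).
  rewrite Rmult_assoc. apply Rmult_le_compat_l.
  apply Rlt_le, Rinv_0_lt_compat; nra.
  assert ((w*u - a*v)^2 <= 2 * (w^2 * u^2) + 2 * (a^2 * v^2)) by (pose proof (pow2_ge_0 (w*u + a*v)); nra).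
  assert (w^2 * u^2 <= B^2 * u^2) by (apply Rmult_le_compat_r; nra).
  assert (0 <= B^2 * v^2) by nra. assert (0 <= a^2 * u^2) by nra.
  nra.
Qed.

Fixpoint hi (g : nat -> R) (B : R) (n : nat) : R :=
  match n with O => 1 + B^2 / g O ^ 2
  | S k => (1 + 2 * (B^2 + g k ^ 2) / g (S k) ^ 2) * hi g B k end.
Fixpoint lo (g : nat -> R) (B : R) (n : nat) : R :=
  match n with O => 1
  | S k => lo g B k / (1 + 2 * (B^2 + g (S k) ^ 2) / g k ^ 2) end.

Lemma hi_0 g B : hi g B 0 = 1 + B^2 / g O ^ 2. Proof. reflexivity. Qed.
Lemma hi_S g B k : hi g B (S k) = (1 + 2 * (B^2 + g k ^ 2) / g (S k) ^ 2) * hi g B k.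
Proof. reflexivity. Qed.
Lemma lo_0 g B : lo g B 0 = 1. Proof. reflexivity. Qed.
Lemma lo_S g B k : lo g B (S k) = lo g B k / (1 + 2 * (B^2 + g (S k) ^ 2) / g k ^ 2).
Proof. reflexivity. Qed.

Lemma sq2_bounds g w B : (forall k, 0 < g k) -> Rabs w <= B ->
  forall n, 0 < lo g B n /\ lo g B n <= sq2 g w n <= hi g B n.
Proof.
  intros Hp Hw. induction n.
  - unfold sq2. rewrite lo_0, hi_0. rewrite opoly_1 by (pose proof (Hp 0%nat); lra).
    change (opoly g 0 w) with 1.
    pose proof (Hp 0%nat).
    assert (w^2 <= B^2) by (rewrite sq_abs; pose proof (Rabs_pos w); nra).
    replace ((w / g 0%nat)^2) with (w^2 / g 0%nat ^2) by (field; lra).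
    assert (w^2 / g 0%nat ^2 <= B^2 / g 0%nat ^2).
    { unfold Rdiv. apply Rmult_le_compat_r; [apply Rlt_le, Rinv_0_lt_compat; nra | lra]. }
    assert (0 <= w^2 / g 0%nat ^2) by (apply Rdiv_le_0_compat; nra).
    repeat split; nra.
  - destruct IHn as (L0 & L1 & L2). unfold sq2 in *.
    pose proof (Hp n). pose proof (Hp (S n)).
    set (x := opoly g n w) in *. set (y := opoly g (S n) w) in *.
    assert (Hz : opoly g (S (S n)) w = (w * y - g n * x) / g (S n)) by apply opoly_SS.
    set (z := opoly g (S (S n)) w) in *.
    assert (Hx : x = (w * y - g (S n) * z) / g n) by (rewrite Hz; field; lra).
    clearbody x y z.
    pose proof (gen_sq w B (g n) (g (S n)) y x Hw ltac:(lra)) as U. rewrite <- Hz in U.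
    pose proof (gen_sq w B (g (S n)) (g n) y z Hw ltac:(lra)) as V. rewrite <- Hx in V.
    assert (0 <= 2 * (B ^ 2 + g n ^ 2) / g (S n) ^ 2)
      by (apply Rdiv_le_0_compat; nra).
    assert (0 <= 2 * (B ^ 2 + g (S n) ^ 2) / g n ^ 2)
      by (apply Rdiv_le_0_compat; nra).
    rewrite lo_S, hi_S.
    split; [|split].
    + apply Rdiv_lt_0_compat; lra.
    + set (K := 1 + 2 * (B ^ 2 + g (S n) ^ 2) / g n ^ 2) in *.
      assert (HK : 0 < K) by (unfold K; lra).
      assert (HKd : K = 1 + 2 * (B ^ 2 + g (S n) ^ 2) / g n ^ 2) by reflexivity. clearbody K.
      apply (Rmult_le_reg_l K). lra.
      replace (K * (lo g B n / K)) with (lo g B n) by (field; apply Rgt_not_eq; lra).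
      assert (0 <= y^2) by nra. assert (0 <= z^2) by nra. rewrite HKd. lra.
    + assert (0 <= y^2) by nra. assert (0 <= x^2) by nra.
      assert (2 * (B ^ 2 + g n ^ 2) / g (S n) ^ 2 * (y ^ 2 + x ^ 2) <=
              2 * (B ^ 2 + g n ^ 2) / g (S n) ^ 2 * hi g B n)
        by (apply Rmult_le_compat_l; lra).
      nra.
Qed.

Lemma get_good g B : cond_C1 g -> cond_C2 g -> exists N0, good g B N0.
Proof.
  intros H1 H2. apply is_lim_seq_spec in H1. apply is_lim_seq_spec in H2.
  destruct (H1 (Rmax 2 (B + 1))) as [Na HNa].
  destruct (H2 (mkposreal 1 Rlt_0_1)) as [Nb HNb].
  exists (Nat.max Na Nb). intros k Hk.
  pose proof (HNa k ltac:(lia)). pose proof (HNb k ltac:(lia)). simpl in H0.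
  rewrite Rminus_0_r in H0.
  pose proof (Rmax_l 2 (B+1)). pose proof (Rmax_r 2 (B+1)).
  repeat split; lra.
Qed.

Lemma lim_bound (u : nat -> R) l n e : Un_cv u l -> (forall j, Rabs (u (n + j)%nat - u n) <= e) ->
  Rabs (l - u n) <= e.
Proof.
  intros Hu Hb. apply Rle_plus_epsilon. intros eta He.
  destruct (Hu eta He) as [N HN].
  pose proof (HN (n + N)%nat ltac:(lia)). unfold R_dist in H.
  pose proof (Hb N).
  replace (l - u n) with ((u (n+N)%nat - u n) - (u (n + N)%nat - l)) by ring.
  eapply Rle_trans. apply Rabs_triang. rewrite Rabs_Ropp. lra.
Qed.

Lemma main_B g (Hp : forall k, 0 < g k) (H1 : cond_C1 g) (H2 : cond_C2 g)
  (H6 : cond_C6 g) (H7 : cond_C7 g) B (HB : 0 < B) :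
  exists N1 : nat, exists A : R, 0 < A /\ 0 < g N1 * lo g B N1 /\
  (forall w, Rabs w <= B -> g N1 * lo g B N1 / 2 <= Qv g w N1 <= A) /\
  (forall w, Rabs w <= B -> exists L : R, is_lim_seq (Fseq g w) L /\ Rabs (L - Qv g w N1) <= Qv g w N1 / 2) /\
  (forall eps, 0 < eps -> exists N, forall n, (N <= n)%nat -> forall w, Rabs w <= B ->
      forall L : R, is_lim_seq (Fseq g w) L -> Rabs (Fseq g w n - L) < eps).
Proof.
  destruct (get_good g B H1 H2) as [N0 HG].
  pose proof (bb_series g H6 H7) as Hbs. pose proof (bb_nonneg g Hp) as Hbn.
  pose proof (prod_bound2 g) as PB.
  set (c := 2 * (B^2 + B + 4)) in *.
  assert (Hc : 0 < c) by (unfold c; nra).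
  destruct (tail_small _ Hbn Hbs (1 / (4 * c)) ltac:(apply Rdiv_lt_0_compat; lra)) as [Nt HNt].
  set (N1 := Nat.max N0 Nt).
  assert (HG1 : good g B N1) by (intros k Hk; apply HG; unfold N1 in Hk; lia).
  set (A := 3 / 2 * (g N1 * hi g B N1)).
  pose proof (Hp N1) as HpN1.
  assert (QN1 : forall w, Rabs w <= B -> g N1 * lo g B N1 / 2 <= Qv g w N1 <= A).
  { intros w Hw. destruct (HG1 N1 (le_n _)) as (_ & Ha & Hd).
    pose proof (Qv_bounds g w N1 B Ha Hd Hw).
    destruct (sq2_bounds g w B Hp Hw N1) as (_ & L1 & L2).
    unfold A. split; nra. }
  assert (Hlo : 0 < g N1 * lo g B N1).
  { destruct (sq2_bounds g 0 B Hp ltac:(rewrite Rabs_R0; lra) N1) as (L0 & _). nra. }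
  assert (HA : 0 < A).
  { pose proof (QN1 0 ltac:(rewrite Rabs_R0; lra)). lra. }
  assert (Ht : forall n j, (N1 <= n)%nat -> 0 <= psum (bb g) (n + j) - psum (bb g) n).
  { intros n j _. pose proof (psum_mono (bb g) n j Hbn). lra. }
  assert (K2 : forall w j, Rabs w <= B -> Rabs (Qv g w (N1 + j) - Qv g w N1) <= Qv g w N1 / 2).
  { intros w j Hw. pose proof (HNt N1 j ltac:(unfold N1; lia)) as T.
    pose proof (Ht N1 j (le_n _)).
    assert (CT : c * (psum (bb g) (N1 + j) - psum (bb g) N1) <= 1/4).
    { apply (Rmult_le_compat_l c) in T; [|lra].
      replace (c * (1 / (4 * c))) with (1/4) in T by (field; lra). exact T. }
    pose proof (PB w B N1 Hp HG1 Hw N1 j (le_n _) ltac:(unfold c in CT; lra)). fold c in H0.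
    pose proof (Qv_nonneg g w B N1 N1 HG1 (le_n _) Hw).
    eapply Rle_trans. exact H0. nra. }
  assert (K2' : forall w m, Rabs w <= B -> (N1 <= m)%nat -> 0 <= Qv g w m <= 3/2 * A).
  { intros w m Hw Hm. replace m with (N1 + (m - N1))%nat by lia.
    pose proof (K2 w (m - N1)%nat Hw). pose proof (QN1 w Hw).
    split. apply (Qv_nonneg g w B N1); auto; lia.
    apply Rabs_le_between in H. lra. }
  assert (K3 : forall d, 0 < d -> exists N, (N1 <= N)%nat /\ forall n j w, (N <= n)%nat -> Rabs w <= B ->
             Rabs (Qv g w (n + j) - Qv g w n) <= d).
  { intros d Hd.
    destruct (tail_small _ Hbn Hbs (d / (3 * A * c)) ltac:(apply Rdiv_lt_0_compat; nra)) as [Nd HNd].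
    exists (Nat.max N1 Nd). split. lia. intros n j w Hn Hw.
    pose proof (HNt n j ltac:(unfold N1 in *; lia)) as T.
    pose proof (HNd n j ltac:(lia)) as T2.
    pose proof (Ht n j ltac:(lia)) as T0.
    assert (CT : c * (psum (bb g) (n + j) - psum (bb g) n) <= 1/4).
    { apply (Rmult_le_compat_l c) in T; [|lra].
      replace (c * (1 / (4 * c))) with (1/4) in T by (field; lra). exact T. }
    pose proof (PB w B N1 Hp HG1 Hw n j ltac:(lia) ltac:(unfold c in CT; lra)) as P. fold c in P.
    pose proof (K2' w n Hw ltac:(lia)).
    eapply Rle_trans. exact P.
    assert (Qv g w n * (2 * (c * (psum (bb g) (n + j) - psum (bb g) n)))
            <= (3/2 * A) * (2 * (c * (d / (3 * A * c))))).
    { apply Rmult_le_compat; try lra. apply Rmult_le_pos; try lra. apply Rmult_le_pos; lra.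
      apply Rmult_le_compat_l; [lra|]. apply Rmult_le_compat_l; lra. }
    replace ((3/2 * A) * (2 * (c * (d / (3 * A * c))))) with d in H0 by (field; lra).
    exact H0. }
  assert (K5 : forall w n, Rabs w <= B -> (N1 <= n)%nat ->
      g n * Rabs (Fseq g w n - Qv g w n) <= (B + 1) * (3/2 * A)).
  { intros w n Hw Hn. destruct (HG1 n Hn) as (_ & Ha & Hd).
    pose proof (Qv_F g w n). pose proof (Qv_bounds g w n B Ha Hd Hw).
    pose proof (K2' w n Hw Hn). pose proof (sq2_pos_le g w n).
    change (Fseq g w n) with (g n * sq2 g w n).
    rewrite <- Rabs_Ropp. replace (- (g n * sq2 g w n - Qv g w n)) with (Qv g w n - g n * sq2 g w n) by ring.
    pose proof (Hp n).
    assert (g n * Rabs (Qv g w n - g n * sq2 g w n) <= g n * ((Rabs w + Rabs (Delta g n)) / 2 * sq2 g w n))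
      by (apply Rmult_le_compat_l; lra).
    assert ((Rabs w + Rabs (Delta g n)) / 2 <= (B + 1) / 2) by lra.
    assert (0 <= g n * sq2 g w n) by nra.
    assert (g n * ((Rabs w + Rabs (Delta g n)) / 2 * sq2 g w n) <= (B+1)/2 * (g n * sq2 g w n)).
    { replace (g n * ((Rabs w + Rabs (Delta g n)) / 2 * sq2 g w n)) with
        ((Rabs w + Rabs (Delta g n)) / 2 * (g n * sq2 g w n)) by ring.
      apply Rmult_le_compat_r; lra. }
    assert ((B+1)/2 * (g n * sq2 g w n) <= (B+1)/2 * (3 * A)) by (apply Rmult_le_compat_l; lra).
    lra. }
  set (Cst := (B + 1) * (3/2 * A)).
  assert (HCst : 0 < Cst) by (unfold Cst; nra).
  assert (K6 : forall eta, 0 < eta -> exists N, (N1 <= N)%nat /\ forall n w, (N <= n)%nat -> Rabs w <= B ->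
             Rabs (Fseq g w n - Qv g w n) < eta).
  { intros eta He. apply is_lim_seq_spec in H1.
    destruct (H1 (Cst / eta)) as [N HN]. exists (Nat.max N N1). split. lia.
    intros n w Hn Hw. pose proof (HN n ltac:(lia)). pose proof (K5 w n Hw ltac:(lia)). fold Cst in H0.
    pose proof (Hp n).
    apply (Rmult_lt_reg_l (g n)). lra.
    apply (Rle_lt_trans _ Cst). exact H0.
    apply (Rmult_lt_compat_r eta) in H. 2: lra.
    replace (Cst / eta * eta) with Cst in H by (field; lra). lra. }
  assert (KL : forall w, Rabs w <= B -> exists Lq, Un_cv (Qv g w) Lq).
  { intros w Hw.
    assert (Cc : Cauchy_crit (Qv g w)).
    { intros eps He. destruct (K3 (eps / 2) ltac:(lra)) as [N [_ HN]].
      exists N. intros n m Hn Hm. unfold Rdist.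
      destruct (Nat.le_ge_cases n m).
      - replace m with (n + (m - n))%nat by lia. rewrite <- Rabs_Ropp.
        replace (- (Qv g w n - Qv g w (n + (m - n))%nat)) with (Qv g w (n + (m - n))%nat - Qv g w n) by ring.
        pose proof (HN n (m - n)%nat w Hn Hw). lra.
      - replace n with (m + (n - m))%nat by lia.
        pose proof (HN m (n - m)%nat w Hm Hw). lra. }
    destruct (Rcomplete.R_complete _ Cc) as [Lq HLq]. exists Lq. exact HLq. }
  assert (KE : forall eps, 0 < eps -> exists N, (N1 <= N)%nat /\ forall n w Lq, (N <= n)%nat -> Rabs w <= B ->
      Un_cv (Qv g w) Lq -> Rabs (Fseq g w n - Lq) < eps).
  { intros eps He.
    destruct (K3 (eps / 2) ltac:(lra)) as [N3 [HN3a HN3]].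
    destruct (K6 (eps / 2) ltac:(lra)) as [N6 [HN6a HN6]].
    exists (Nat.max N3 N6). split. lia. intros n w Lq Hn Hw HL.
    pose proof (lim_bound (Qv g w) Lq n (eps/2) HL (fun j => HN3 n j w ltac:(lia) Hw)).
    pose proof (HN6 n w ltac:(lia) Hw).
    replace (Fseq g w n - Lq) with ((Fseq g w n - Qv g w n) - (Lq - Qv g w n)) by ring.
    eapply Rle_lt_trans. apply Rabs_triang. rewrite Rabs_Ropp. lra. }
  assert (KFl : forall w Lq, Rabs w <= B -> Un_cv (Qv g w) Lq -> is_lim_seq (Fseq g w) Lq).
  { intros w Lq Hw HL. apply is_lim_seq_Reals. intros eps He.
    destruct (KE eps He) as [N [_ HN]]. exists N. intros n Hn. unfold R_dist.
    apply (HN n w Lq); auto. }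
  exists N1, A. split; [exact HA|]. split; [exact Hlo|]. split; [exact QN1|]. split.
  - intros w Hw. destruct (KL w Hw) as [Lq HLq]. exists Lq. split. apply KFl; auto.
    apply (lim_bound (Qv g w) Lq N1). exact HLq. intros j. apply K2; auto.
  - intros eps He. destruct (KE eps He) as [N [_ HN]]. exists N.
    intros n Hn w Hw L HL. destruct (KL w Hw) as [Lq HLq].
    pose proof (KFl w Lq Hw HLq) as HF.
    apply is_lim_seq_unique in HF. apply is_lim_seq_unique in HL.
    assert (HE : Finite L = Finite Lq) by congruence. apply Rbar_finite_eq in HE. rewrite HE.
    apply (HN n w Lq); auto.
Qed.

Theorem theorem2 (gamma : nat -> R)
  (Hpos : forall n, 0 < gamma n)
  (H1 : cond_C1 gamma) (H2 : cond_C2 gamma) (H3 : cond_C3 gamma) (H4 : cond_C4 gamma)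
  (H5 : cond_C5 gamma) (H6 : cond_C6 gamma) (H7 : cond_C7 gamma) :
  (forall w : R, ex_finite_lim_seq (Fseq gamma w)) /\
  (forall B : R, 0 < B ->
     exists mB MB : R, 0 < mB /\ mB < MB /\
       (forall w : R, Rabs w <= B ->
          mB <= real (Lim_seq (Fseq gamma w)) <= MB) /\
       (forall eps : R, 0 < eps -> exists N : nat, forall n : nat, (N <= n)%nat ->
          forall w : R, Rabs w <= B ->
            Rabs (Fseq gamma w n - real (Lim_seq (Fseq gamma w))) < eps)).
Proof.
  split.
  - intros w. pose proof (Rabs_pos w).
    destruct (main_B gamma Hpos H1 H2 H6 H7 (Rabs w + 1) ltac:(lra))
      as (N1 & A & _ & _ & _ & HE & _).
    destruct (HE w ltac:(lra)) as (L & HL & _). exists L. exact HL.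
  - intros B HB.
    destruct (main_B gamma Hpos H1 H2 H6 H7 B HB) as (N1 & A & HA & Hlo & HQ & HE & HU).
    exists (gamma N1 * lo gamma B N1 / 4), (3/2 * A + 1).
    split. lra. split.
    { pose proof (HQ 0 ltac:(rewrite Rabs_R0; lra)). lra. }
    split.
    + intros w Hw. destruct (HE w Hw) as (L & HL & HLb).
      rewrite (is_lim_seq_unique _ _ HL). simpl.
      pose proof (HQ w Hw). apply Rabs_le_between in HLb. lra.
    + intros eps He. destruct (HU eps He) as [N HN]. exists N.
      intros n Hn w Hw. destruct (HE w Hw) as (L & HL & _).
      rewrite (is_lim_seq_unique _ _ HL). simpl. apply (HN n Hn w Hw L HL).
Qed.
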